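(* Let $V$ be a finite-dimensional real vector space with a Lorentzian inner product $g$, and let $V=E_1\oplus\cdots\oplus E_r$ ($r\ge1$) be a $g$-orthogonal direct sum of subspaces on each of which $g$ is non-degenerate, with $E_r$ Lorentzian. For $1\le\beta\le r$ let $g_\beta(X,Y)=g(X_\beta,Y_\beta)$, where $X_\beta,Y_\beta$ are the $E_\beta$-components. Let $p\in E_r$ be a non-zero light-like vector and $\theta=g(p,\cdot)$. Let $\bar g_1=g,\bar g_2,\dots,\bar g_{r+1}$ be linearly independent symmetric bilinear forms on $V$ with $$\bar g_\alpha=\sum_{\beta=1}^r C_{\beta\alpha}g_\beta+C_{r+1\,\alpha}\,\theta\otimes\theta,$$ and assume $C_{r\alpha}=0$ and $C_{r+1\,\alpha}\neq0$ for all $2\le\alpha\le r+1$. Let $W=\bigcap_{\alpha=2}^{r+1}\ker\bar g_\alpha$. Then $$W=\{X\in E_r\mid\theta(X)=0\},\qquad W^{\perp_g}=E_1\oplus\cdots\oplus E_{r-1}\oplus\mathbb{R}p.$$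
   Context: For a symmetric bilinear form $b$ on $V$, $\ker b=\{X\in V\mid b(X,Y)=0\ \forall Y\in V\}$; $W^{\perp_g}$ is the $g$-orthogonal complement of $W$ in $V$. *)

(* Defs.v *)
From HB Require Import structures.
From mathcomp Require Import all_boot all_order all_algebra.
From mathcomp Require Import reals.
Set Implicit Arguments. Unset Strict Implicit. Unset Printing Implicit Defensive.
Import Order.TTheory GRing.Theory Num.Theory.
Local Open Scope ring_scope.

Section Defs.
Variables (R : realType) (V : vectType R).

Definition symbilinear (b : V -> V -> R) : Prop :=
  (forall (a : R) (x y z : V), b (a *: x + y) z = a * b x z + b y z) /\
  (forall x y : V, b x y = b y x).

Definition nondeg_on (b : V -> V -> R) (E : {vspace V}) : Prop :=
  forall x, x \in E -> (forall y, y \in E -> b x y = 0) -> x = 0.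

Definition negdef_on (b : V -> V -> R) (U : {vspace V}) : Prop :=
  forall x, x \in U -> x != 0 -> b x x < 0.

Definition lorentzian_on (b : V -> V -> R) (E : {vspace V}) : Prop :=
  [/\ nondeg_on b E,
      exists U : {vspace V}, [/\ (U <= E)%VS, \dim U = 1%N & negdef_on b U]
    & forall U : {vspace V}, (U <= E)%VS -> negdef_on b U -> (\dim U <= 1)%N].

Definition comp (n : nat) (E : 'I_n -> {vspace V}) (i : 'I_n) (x : V) : V :=
  sumv_pi (\sum_(j < n) E j)%VS i x.

Definition gcomp (g : V -> V -> R) (n : nat) (E : 'I_n -> {vspace V})
  (i : 'I_n) (x y : V) : R := g (comp E i x) (comp E i y).

Definition kerb (b : V -> V -> R) (x : V) : Prop := forall y, b x y = 0.

Definition orthc (g : V -> V -> R) (S : V -> Prop) (y : V) : Prop :=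
  forall x, S x -> g x y = 0.

Definition forms_lin_indep (m : nat) (b : 'I_m -> V -> V -> R) : Prop :=
  forall c : 'I_m -> R,
    (forall x y, \sum_(a < m) c a * b a x y = 0) -> forall a, c a = 0.

End Defs.

Definition wd (n : nat) (i : 'I_n) : 'I_n.+1 := widen_ord (leqnSn n) i.

(* Main.v *)
Require Import Defs.
From HB Require Import structures.
From mathcomp Require Import all_boot all_order all_algebra.
From mathcomp Require Import reals.
From Stdlib Require Import Classical.
Import Order.TTheory GRing.Theory Num.Theory.
Local Open Scope ring_scope.

Lemma comp_mem (R : realType) (V : vectType R) (n : nat) (E : 'I_n -> {vspace V}) (i : 'I_n) (x : V) :
  Defs.comp E i x \in E i.
Proof. exact: memv_sum_pi. Qed.

Lemma comp_sum (R : realType) (V : vectType R) (n : nat) (E : 'I_n -> {vspace V}) (x : V) :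
  (\sum_(i < n) E i)%VS = fullv -> \sum_(i < n) Defs.comp E i x = x.
Proof.
move=> hf; rewrite /Defs.comp; apply: sumv_pi_sum.
by rewrite hf memvf.
Qed.

Lemma comp_id (R : realType) (V : vectType R) (n : nat) (E : 'I_n -> {vspace V}) (j : 'I_n) (x : V) :
  (\sum_(i < n) E i)%VS = fullv -> directv (\sum_(i < n) E i) ->
  x \in E j -> forall i, Defs.comp E i x = if i == j then x else 0.
Proof.
move=> hf /directv_sum_independent hd xE i.
pose us i := Defs.comp E i x - (if i == j then x else 0).
have h0 : us i = 0.
  apply: (hd us) => //.
    move=> l _; apply: memvB; first exact: comp_mem.
    by case: eqP => [->|_]; rewrite ?mem0v.
  rewrite /us sumrB comp_sum // -big_mkcond /= big_pred1_eq subrr //.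
by move/eqP: h0; rewrite subr_eq0 => /eqP.
Qed.

Arguments comp_mem {R V n E i x}.
Arguments comp_sum {R V n E} x.
Arguments comp_id {R V n E j x}.

Section Bil.
Context (R : realType) (V : vectType R) (g : V -> V -> R) (hg : symbilinear g).

Lemma gZDl a x y z : g (a *: x + y) z = a * g x z + g y z.
Proof. by case: hg. Qed.
Lemma gC x y : g x y = g y x.
Proof. by case: hg. Qed.
Lemma gDl x y z : g (x + y) z = g x z + g y z.
Proof. by rewrite -[x]scale1r gZDl mul1r scale1r. Qed.
Lemma g0l z : g 0 z = 0.
Proof. by have := gDl 0 0 z; rewrite addr0 => /(canLR (addrK _)); rewrite subrr. Qed.
Lemma gZl a x z : g (a *: x) z = a * g x z.
Proof. by rewrite -[a *: x]addr0 gZDl g0l addr0. Qed.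
Lemma gNl x z : g (- x) z = - g x z.
Proof. by rewrite -scaleN1r gZl mulN1r. Qed.
Lemma gBl x y z : g (x - y) z = g x z - g y z.
Proof. by rewrite gDl gNl. Qed.
Lemma gDr x y z : g z (x + y) = g z x + g z y.
Proof. by rewrite !(gC z) gDl. Qed.
Lemma gZr a x z : g z (a *: x) = a * g z x.
Proof. by rewrite !(gC z) gZl. Qed.
Lemma g0r z : g z 0 = 0.
Proof. by rewrite gC g0l. Qed.
Lemma gBr x y z : g z (x - y) = g z x - g z y.
Proof. by rewrite !(gC z) gBl. Qed.
Lemma g_sumr (I : Type) (r : seq I) (P : pred I) (F : I -> V) z :
  g z (\sum_(i <- r | P i) F i) = \sum_(i <- r | P i) g z (F i).
Proof. exact: (big_morph (g z) (fun x y => gDr x y z) (g0r z)). Qed.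
End Bil.

Lemma exists_nz (R : realType) (V : vectType R) (g : V -> V -> R) (k : nat)
  (E : 'I_k.+1 -> {vspace V}) (p : V)
  (gbar : 'I_k.+2 -> V -> V -> R) (C : 'I_k.+2 -> 'I_k.+2 -> R) :
  forms_lin_indep gbar ->
  (forall a x y, gbar a x y =
     \sum_(b < k.+1) C (wd b) a * gcomp g E b x y
     + C ord_max a * (g p x * g p y)) ->
  (forall a, a != ord0 -> C (wd ord_max) a = 0) ->
  forall b : 'I_k.+1, b != ord_max -> exists2 a, a != ord0 & C (wd b) a != 0.
Proof.
move=> hli hform hC b hb.
case: (boolP [exists a, (a != ord0) && (C (wd b) a != 0)]) => [/existsP [a /andP[]] | /existsPn H].
  by exists a.
have H' : forall a, a != ord0 -> C (wd b) a = 0.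
  by move=> a ha; have := H a; rewrite ha /= negbK => /eqP.
pose gi (j : 'I_k.+1) : 'I_k.+2 := if j == ord_max then ord_max else wd j.
pose N : 'M[R]_(k.+1) := \matrix_(i, j) C (gi j) (lift ord0 i).
have dN : \det N == 0.
  rewrite (expand_det_col N b) big1 // => i _.
  by rewrite mxE /gi (negPf hb) H' ?mul0r // eq_sym neq_lift.
have /det0P [v vnz vN] := dN.
have hcol : forall j, \sum_i v 0 i * C (gi j) (lift ord0 i) = 0.
  move=> j; transitivity ((v *m N) 0 j); last by rewrite vN mxE.
  by rewrite mxE; apply: eq_bigr => i _; rewrite mxE.
pose cc (a : 'I_k.+2) := if unlift ord0 a is Some i then v 0 i else 0.
have hz : forall a, cc a = 0.
  apply: hli => x y.
  rewrite big_ord_recl /cc unlift_none mul0r add0r.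
  under eq_bigr => i _ do rewrite liftK hform mulrDr mulr_sumr.
  rewrite big_split /= exchange_big /= big1 ?add0r.
    under eq_bigr => i _ do rewrite mulrA.
    rewrite -mulr_suml.
    have := hcol ord_max; rewrite /gi eqxx => ->; by rewrite mul0r.
  move=> b' _.
  under eq_bigr => i _ do rewrite mulrA.
  rewrite -mulr_suml.
  case: (eqVneq b' ord_max) => [->|hb'].
    by rewrite big1 ?mul0r // => i _; rewrite hC ?mulr0 // eq_sym neq_lift.
  by have := hcol b'; rewrite /gi (negPf hb') => ->; rewrite mul0r.
exfalso; move/eqP: vnz; apply; apply/rowP => i; rewrite mxE.
by have := hz (lift ord0 i); rewrite /cc liftK.
Qed.

Arguments gC {R V g} hg.
Arguments exists_nz {R V g k E p gbar C}.

Theorem lemma2 (R : realType) (V : vectType R) (g : V -> V -> R) (k : nat)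
  (E : 'I_k.+1 -> {vspace V}) (p : V)
  (gbar : 'I_k.+2 -> V -> V -> R) (C : 'I_k.+2 -> 'I_k.+2 -> R) :
  symbilinear g -> lorentzian_on g fullv ->
  (\sum_(i < k.+1) E i)%VS = fullv -> directv (\sum_(i < k.+1) E i) ->
  (forall i j, i != j -> forall x y, x \in E i -> y \in E j -> g x y = 0) ->
  (forall i, nondeg_on g (E i)) -> lorentzian_on g (E ord_max) ->
  p \in E ord_max -> p != 0 -> g p p = 0 ->
  (forall a, symbilinear (gbar a)) -> gbar ord0 = g ->
  forms_lin_indep gbar ->
  (forall a x y, gbar a x y =
     \sum_(b < k.+1) C (wd b) a * gcomp g E b x y
     + C ord_max a * (g p x * g p y)) ->
  (forall a, a != ord0 -> C (wd ord_max) a = 0 /\ C ord_max a != 0) ->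
  let W := fun X => forall a : 'I_k.+2, a != ord0 -> kerb (gbar a) X in
  (forall X, W X <-> (X \in E ord_max /\ g p X = 0)) /\
  (forall Y, orthc g W Y <->
     Y \in (\sum_(i < k.+1 | i != ord_max) E i + <[p]>)%VS).
Proof.
move=> hg _ hsum hdir horth hnd _ hp hpnz _ _ _ hli hform hCa W.
have hC0 : forall a, a != ord0 -> C (wd ord_max) a = 0 by move=> a /hCa [].
have [q [hqE hq1]] : exists q, q \in E ord_max /\ g p q = 1.
  have [q0 [hq0E hq0]] : exists q0, q0 \in E ord_max /\ g p q0 != 0.
    apply: NNPP => hn; apply: (negP hpnz); apply/eqP; apply: (hnd ord_max p hp) => y hy.
    apply/eqP; apply: negbNE; apply/negP => hy'; apply: hn; by exists y.
  exists ((g p q0)^-1 *: q0); split; first exact: memvZ.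
  by rewrite gZr // mulVf.
have hgbE : forall a x y, a != ord0 -> x \in E ord_max ->
    gbar a x y = C ord_max a * (g p x * g p y).
  move=> a x y ha hx; rewrite hform big1 ?add0r // => b _; rewrite /gcomp.
  case: (eqVneq b ord_max) => [->|hb]; first by rewrite hC0 // mul0r.
  by rewrite (comp_id hsum hdir hx) (negPf hb) g0l // mulr0.
have hmaxne : (ord_max : 'I_k.+2) != ord0 by [].
have part1b : forall x, x \in E ord_max -> g p x = 0 -> W x.
  by move=> x hx px a ha y; rewrite hgbE // px mul0r mulr0.
have part1 : forall X, W X <-> (X \in E ord_max /\ g p X = 0).
  move=> x; split; last by case; exact: part1b.
  move=> Wx.
  have hcb : forall b, b != ord_max -> Defs.comp E b x = 0.
    move=> b hb; have [a ha hCb] := exists_nz hli hform hC0 b hb.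
    apply: (hnd b); first exact: comp_mem.
    move=> y hy; have := Wx a ha y; rewrite hform (bigD1 b) //= big1 ?addr0.
      rewrite [g p y](horth ord_max b) 1?eq_sym // !mulr0 addr0 /gcomp.
      rewrite [Defs.comp E b y](comp_id hsum hdir hy) eqxx.
      by move/eqP; rewrite mulf_eq0 (negPf hCb) /= => /eqP.
    move=> b' hb'; rewrite /gcomp [Defs.comp E b' y](comp_id hsum hdir hy).
    by rewrite (negPf hb') g0r // mulr0.
  have hxE : x = Defs.comp E ord_max x.
    rewrite -{1}(comp_sum x hsum) (bigD1 ord_max) //= big1 ?addr0 //.
    idtac.
  have xE : x \in E ord_max by rewrite hxE comp_mem.
  split => //.
  have := Wx ord_max hmaxne q; rewrite hgbE // hq1 mulr1 => /eqP.
  by rewrite mulf_eq0 (negPf (hCa _ hmaxne).2) /= => /eqP.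
split => // Y; split; last first.
  move=> hY x /part1 [xE px].
  move/memv_addP: hY => [u hu [v /vlineP [c ->] ->]].
  rewrite gDr // gZr // (gC hg x p) px mulr0 addr0.
  move/memv_sumP: hu => [us hus ->]; rewrite g_sumr // big1 // => i hi.
  by apply: (horth ord_max i) => //; [rewrite eq_sym | apply: hus].
move=> hY.
set Yr := Defs.comp E ord_max Y; set c := g q Yr.
have key : forall x, x \in E ord_max -> g x Y = g x Yr.
  move=> x hx; rewrite -{1}(comp_sum Y hsum) g_sumr // (bigD1 ord_max) //=.
  rewrite big1 ?addr0 // => b hb; apply: (horth ord_max b) => //.
    by rewrite eq_sym.
  exact: comp_mem.
have hZ : Yr - c *: p = 0.
  apply: (hnd ord_max); first by apply: memvB; [exact: comp_mem | exact: memvZ].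
  move=> x hx.
  have hx'E : x - g p x *: q \in E ord_max by apply: memvB => //; exact: memvZ.
  have px' : g p (x - g p x *: q) = 0 by rewrite gBr // gZr // hq1 mulr1 subrr.
  have := hY _ (part1b _ hx'E px'); rewrite key // gBl // gZl // -/c.
  move/eqP; rewrite subr_eq0 => /eqP h.
  by rewrite gBl // gZl // (gC hg Yr) h mulrC subrr.
have -> : Y = \sum_(i < k.+1 | i != ord_max) Defs.comp E i Y + c *: p.
  move/eqP: hZ; rewrite subr_eq0 => /eqP <-.
  by rewrite -{1}(comp_sum Y hsum) (bigD1 ord_max) //= addrC.
apply: memv_add; last exact: memvZ (memv_line p).
by apply: memv_sumr => i _; exact: comp_mem.
Qed.
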